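(* Let $E$ be a congruence on $\overline{\boldsymbol{T}(X_1,\ldots,X_n)}$, $F$ a congruence on $\overline{\boldsymbol{T}(Y_1,\ldots,Y_m)}$, $V:=\boldsymbol{V}(E)$, $W:=\boldsymbol{V}(F)$, and let $\psi:\overline{\boldsymbol{T}(X_1,\ldots,X_n)}/E\to\overline{\boldsymbol{T}(Y_1,\ldots,Y_m)}/F$ be a $\boldsymbol{T}$-algebra homomorphism. If $\psi$ is injective and $F=\boldsymbol{E}(W)$, then $E=\boldsymbol{E}(V)$. In particular, when $\overline{\boldsymbol{T}(X_1,\ldots,X_n)}/E$ is isomorphic to $\overline{\boldsymbol{T}(Y_1,\ldots,Y_m)}/F$ as a $\boldsymbol{T}$-algebra, $E=\boldsymbol{E}(\boldsymbol{V}(E))$ if and only if $F=\boldsymbol{E}(\boldsymbol{V}(F))$.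
   Context: $\boldsymbol{T}=\mathbb{R}\cup\{-\infty\}$ with $a\oplus b=\max\{a,b\}$, $a\odot b=a+b$. $\overline{\boldsymbol{T}[X_1,\ldots,X_n]}$ is the tropical polynomial semiring modulo identifying polynomials defining the same function $\boldsymbol{T}^n\to\boldsymbol{T}$; it is cancellative and $\overline{\boldsymbol{T}(X_1,\ldots,X_n)}$ is its semifield of fractions. Each element defines a function $\mathbb{R}^n\to\boldsymbol{T}$ (quotients evaluated as differences). $\boldsymbol{T}$-algebras are semirings with a semiring homomorphism from $\boldsymbol{T}$; homomorphisms are compatible semiring homomorphisms. A congruence is an equivalence relation compatible with both operations. $\boldsymbol{V}(E)=\{x\in\mathbb{R}^n\mid f(x)=g(x)\ \forall(f,g)\in E\}$; for $V\subset\mathbb{R}^n$, $\boldsymbol{E}(V)=\{(f,g)\mid f(x)=g(x)\ \forall x\in V\}$. Elements of $\overline{\boldsymbol{T}(Y_1,\ldots,Y_m)}/F$ are evaluated at points of $\boldsymbol{V}(F)$ via representatives. *)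

(* Defs.v *)
From Stdlib Require Import Reals.
From mathcomp Require Import all_boot.

Set Implicit Arguments.
Unset Strict Implicit.
Unset Printing Implicit Defensive.

(** The tropical semifield T = R ∪ {-oo}: [None] is -oo. *)
Definition T := option R.

Definition tmax (a b : T) : T :=
  match a, b with
  | None, _ => b
  | _, None => a
  | Some x, Some y => Some (Rmax x y)
  end.

Definition tplus (a b : T) : T :=
  match a, b with
  | Some x, Some y => Some (Rplus x y)
  | _, _ => None
  end.

(** quotient a / b evaluated as a difference (b is always finite below) *)
Definition tdiv (a b : T) : T :=
  match a, b with
  | Some x, Some y => Some (Rminus x y)
  | _, _ => None
  end.

Definition pt (n : nat) := 'I_n -> R.
Definition fn (n : nat) := pt n -> T.

(** A tropical polynomial in n variables: a finite list of monomials
    c ⊙ X^a with c real and a ∈ N^n (monomials with coefficient -oo are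
    omitted; the empty list is the polynomial -oo). *)
Definition tpoly (n : nat) := list (R * ('I_n -> nat)).

Definition lin (n : nat) (a : 'I_n -> nat) (x : pt n) : R :=
  \big[Rplus/R0]_(i < n) (Rmult (INR (a i)) (x i)).

Definition peval (n : nat) (p : tpoly n) (x : pt n) : T :=
  List.fold_right (fun t acc => tmax (Some (Rplus (fst t) (lin (snd t) x))) acc) None p.

(** Elements of the semifield  \overline{T(X_1,...,X_n)}, represented by the
    function R^n -> T they define: quotients f/g of tropical polynomials with
    g nonzero (two such fractions are equal in the semifield iff they define
    the same function on R^n). *)
Definition is_trat (n : nat) (h : fn n) : Prop :=
  exists (f g : tpoly n), g <> nil /\ forall x, h x = tdiv (peval f x) (peval g x).

Definition tadd (n : nat) (h1 h2 : fn n) : fn n := fun x => tmax (h1 x) (h2 x).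
Definition tmul (n : nat) (h1 h2 : fn n) : fn n := fun x => tplus (h1 x) (h2 x).
Definition tconst (n : nat) (c : T) : fn n := fun _ => c.

Record congruence (n : nat) (E : fn n -> fn n -> Prop) : Prop := {
  cong_dom   : forall h h', E h h' -> is_trat h /\ is_trat h';
  cong_refl  : forall h, is_trat h -> E h h;
  cong_sym   : forall h h', E h h' -> E h' h;
  cong_trans : forall h h' h'', E h h' -> E h' h'' -> E h h'';
  cong_add   : forall h1 h1' h2 h2', E h1 h1' -> E h2 h2' ->
                 E (tadd h1 h2) (tadd h1' h2');
  cong_mul   : forall h1 h1' h2 h2', E h1 h1' -> E h2 h2' ->
                 E (tmul h1 h2) (tmul h1' h2')
}.

Definition Vset (n : nat) (E : fn n -> fn n -> Prop) : pt n -> Prop :=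
  fun x => forall h h', E h h' -> h x = h' x.

Definition Erel (n : nat) (V : pt n -> Prop) : fn n -> fn n -> Prop :=
  fun h h' => is_trat h /\ is_trat h' /\ forall x, V x -> h x = h' x.

Definition rel_eq (n : nat) (E E' : fn n -> fn n -> Prop) : Prop :=
  forall h h', E h h' <-> E' h h'.

(** A T-algebra homomorphism  psi : \overline{T(X)}/E -> \overline{T(Y)}/F,
    presented (setoid style) by a map phi on representatives:
    psi [h]_E = [phi h]_F.  phi must respect E, and psi must preserve ⊕, ⊙
    and the structure map from T (hence also 0 = -oo and 1 = 0). *)
Record talg_hom (n m : nat) (E : fn n -> fn n -> Prop)
    (F : fn m -> fn m -> Prop) (phi : fn n -> fn m) : Prop := {
  hom_wd    : forall a b, E a b -> F (phi a) (phi b);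
  hom_add   : forall a b, is_trat a -> is_trat b ->
                F (phi (tadd a b)) (tadd (phi a) (phi b));
  hom_mul   : forall a b, is_trat a -> is_trat b ->
                F (phi (tmul a b)) (tmul (phi a) (phi b));
  hom_const : forall c : T, F (phi (@tconst n c)) (@tconst m c)
}.

Definition hom_injective (n m : nat) (E : fn n -> fn n -> Prop)
    (F : fn m -> fn m -> Prop) (phi : fn n -> fn m) : Prop :=
  forall a b, is_trat a -> is_trat b -> F (phi a) (phi b) -> E a b.

Definition hom_surjective (n m : nat) (E : fn n -> fn n -> Prop)
    (F : fn m -> fn m -> Prop) (phi : fn n -> fn m) : Prop :=
  forall b, is_trat b -> exists a, is_trat a /\ F (phi a) b.

Definition talg_iso (n m : nat) (E : fn n -> fn n -> Prop)
    (F : fn m -> fn m -> Prop) : Prop :=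
  exists phi : fn n -> fn m,
    talg_hom E F phi /\ hom_injective E F phi /\ hom_surjective E F phi.

(* Main.v *)
From HB Require Import structures.
Require Import Defs.
From Stdlib Require Import Reals Lra FunctionalExtensionality Classical ClassicalEpsilon.
From mathcomp Require Import all_boot.

Lemma Rplus_assoc' : associative Rplus.
Proof. move=> x y z; by rewrite Rplus_assoc. Qed.
HB.instance Definition _ := Monoid.isComLaw.Build R R0 Rplus Rplus_assoc' Rplus_comm Rplus_0_l.

Set Implicit Arguments.
Open Scope R_scope.

Definition zv (n : nat) : 'I_n -> nat := fun _ => 0%N.
Definition dv (n : nat) (i : 'I_n) : 'I_n -> nat := fun j => if j == i then 1%N else 0%N.
Definition av (n : nat) (a b : 'I_n -> nat) : 'I_n -> nat := fun j => (a j + b j)%N.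

Lemma lin_zero n (x : pt n) : lin (@zv n) x = 0.
Proof. rewrite /lin big1 // => i _; rewrite /zv /=; ring. Qed.

Lemma lin_add n (a b : 'I_n -> nat) (x : pt n) : lin (av a b) x = lin a x + lin b x.
Proof. rewrite /lin -big_split /=; apply: eq_bigr => i _; rewrite /av plus_INR; ring. Qed.

Lemma lin_d n (i : 'I_n) (x : pt n) : lin (dv i) x = x i.
Proof.
rewrite /lin (bigD1 i) //= big1 => [|j /negbTE Hj]; rewrite /dv ?eqxx ?Hj /=; ring.
Qed.

Lemma peval1 n c (a : 'I_n -> nat) x : peval [:: (c, a)] x = Some (c + lin a x).
Proof. by []. Qed.

Lemma trat_mono n c (a : 'I_n -> nat) : is_trat (fun x => Some (c + lin a x)).
Proof.
exists [:: (c, a)], [:: (0, @zv n)]; split => // x.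
rewrite !peval1 lin_zero /=; f_equal; ring.
Qed.

Lemma trat_poly n (p : tpoly n) : is_trat (fun x => peval p x).
Proof.
exists p, [:: (0, @zv n)]; split => // x.
rewrite !peval1 lin_zero /=; case: (peval p x) => //= r; f_equal; ring.
Qed.

Lemma trat_const n c : is_trat (@tconst n c).
Proof.
case: c => [r|].
  have -> : @tconst n (Some r) = (fun x => Some (r + lin (@zv n) x)).
    by apply: functional_extensionality => x; rewrite lin_zero /tconst; f_equal; ring.
  exact: trat_mono.
exists [::], [:: (0, @zv n)]; split => //.
Qed.

Lemma trat_X n (i : 'I_n) : is_trat (fun x : pt n => Some (x i)).
Proof.
have -> : (fun x : pt n => Some (x i)) = (fun x => Some (0 + lin (dv i) x)).
  by apply: functional_extensionality => x; rewrite lin_d; f_equal; ring.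
exact: trat_mono.
Qed.

Lemma trat_Xinv n (i : 'I_n) : is_trat (fun x : pt n => Some (- x i)).
Proof.
exists [:: (0, @zv n)], [:: (0, dv i)]; split => // x.
rewrite !peval1 lin_zero lin_d /=; f_equal; ring.
Qed.

Lemma peval_some n (p : tpoly n) x : p <> [::] -> exists v, peval p x = Some v.
Proof.
case: p => // t p _ /=; case: (peval p x) => [r|]; last by eexists.
by eexists.
Qed.


Lemma core n m (E : fn n -> fn n -> Prop) (F : fn m -> fn m -> Prop) (psi : fn n -> fn m) (y : pt m) :
  congruence E -> congruence F -> talg_hom E F psi -> Vset F y ->
  exists x0 : pt n, Vset E x0 /\ forall h, is_trat h -> psi h y = h x0.
Proof.
move=> HE HF Hh Hy.
have evadd : forall a b, is_trat a -> is_trat b -> psi (tadd a b) y = tmax (psi a y) (psi b y).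
  by move=> a b Ha Hb; rewrite (Hy _ _ (hom_add Hh Ha Hb)).
have evmul : forall a b, is_trat a -> is_trat b -> psi (tmul a b) y = tplus (psi a y) (psi b y).
  by move=> a b Ha Hb; rewrite (Hy _ _ (hom_mul Hh Ha Hb)).
have evc : forall c, psi (tconst c) y = c.
  by move=> c; rewrite (Hy _ _ (hom_const Hh c)).
have Xfin : forall i : 'I_n, exists r, psi (fun x : pt n => Some (x i)) y = Some r.
  move=> i.
  have := evmul _ _ (trat_X i) (trat_Xinv i).
  have -> : tmul (fun x : pt n => Some (x i)) (fun x => Some (- x i)) = tconst (Some 0).
    by apply: functional_extensionality => x; rewrite /tmul /tconst /=; f_equal; ring.
  rewrite evc; case: (psi (fun x : pt n => Some (x i)) y) => [r|] //; by exists r.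
pose x0 : pt n := fun i => match psi (fun x : pt n => Some (x i)) y with Some r => r | None => 0 end.
have evX : forall i, psi (fun x : pt n => Some (x i)) y = Some (x0 i).
  by move=> i; rewrite /x0; case: (Xfin i) => r ->.
pose P (a : 'I_n -> nat) := forall c, psi (fun x => Some (c + lin a x)) y = Some (c + lin a x0).
have Padd : forall a b, P a -> P b -> P (av a b).
  move=> a b Pa Pb c.
  have -> : (fun x => Some (c + lin (av a b) x)) =
            tmul (fun x => Some (c + lin a x)) (fun x => Some (0 + lin b x)).
    by apply: functional_extensionality => x; rewrite /tmul lin_add /=; f_equal; ring.
  rewrite evmul ?Pa ?Pb; try exact: trat_mono.
  by rewrite lin_add /=; f_equal; ring.
have Pz : P (@zv n).
  move=> c; have -> : (fun x => Some (c + lin (@zv n) x)) = tconst (Some c).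
    by apply: functional_extensionality => x; rewrite lin_zero /tconst; f_equal; ring.
  by rewrite evc lin_zero; f_equal; ring.
have Pd : forall i, P (dv i).
  move=> i c; have -> : (fun x => Some (c + lin (dv i) x)) = tmul (tconst (Some c)) (fun x : pt n => Some (x i)).
    by apply: functional_extensionality => x; rewrite lin_d.
  by rewrite evmul ?evc ?evX ?lin_d //; [exact: trat_const | exact: trat_X].
have Pk : forall i k, P (fun j => (k * dv i j)%N).
  move=> i; elim=> [|k IH].
    have -> : (fun j => (0 * dv i j)%N) = @zv n by apply: functional_extensionality.
    exact: Pz.
  have -> : (fun j => (k.+1 * dv i j)%N) = av (fun j => (k * dv i j)%N) (dv i).
    by apply: functional_extensionality => j; rewrite /av mulSn addnC.
  exact: Padd.
have Pall : forall a r, uniq r -> P (fun j => if j \in r then a j else 0%N).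
  move=> a; elim=> [|i r IH] /=.
    move=> _; have -> : (fun j : 'I_n => if j \in [::] then a j else 0%N) = @zv n by [].
    exact: Pz.
  move=> /andP [Hi Hr].
  have -> : (fun j => if j \in i :: r then a j else 0%N) =
            av (fun j => if j \in r then a j else 0%N) (fun j => (a i * dv i j)%N).
    apply: functional_extensionality => j; rewrite /av /dv in_cons.
    case: (eqVneq j i) => [->|Hji] /=; first by rewrite (negbTE Hi) muln1.
    by rewrite muln0 addn0.
  by apply: Padd; [exact: IH | exact: Pk].
have Pa : forall a, P a.
  move=> a; have := Pall a _ (enum_uniq 'I_n).
  have -> // : (fun j => if j \in enum 'I_n then a j else 0%N) = a.
  by apply: functional_extensionality => j; rewrite mem_enum.
have Ppoly : forall p : tpoly n, psi (fun x => peval p x) y = peval p x0.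
  elim=> [|[c a] p IH] /=.
    by have -> : (fun x : pt n => None) = @tconst n None by []; rewrite evc.
  have -> : (fun x => tmax (Some (c + lin a x)) (peval p x)) =
            tadd (fun x => Some (c + lin a x)) (fun x => peval p x) by [].
  by rewrite evadd ?IH ?Pa //; [exact: trat_mono | exact: trat_poly].
have Hall : forall h, is_trat h -> psi h y = h x0.
  move=> h Hh0; have [f [g [Hg Hfg]]] := Hh0.
  have Hhf : tmul h (fun x => peval g x) = (fun x => peval f x).
    apply: functional_extensionality => x; rewrite /tmul Hfg.
    have [v ->] := peval_some x Hg.
    by case: (peval f x) => //= r; f_equal; ring.
  have := evmul _ _ Hh0 (trat_poly g); rewrite Hhf !Ppoly Hfg.
  have [v ->] := peval_some x0 Hg.
  case: (psi h y) => [e|] /=; case: (peval f x0) => // r /= [Hr]; f_equal; rewrite Hr; ring.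
exists x0; split => // h h' Hhh.
have [Ht Ht'] := cong_dom HE Hhh.
by rewrite -Hall // -(Hall h') //; exact: (Hy _ _ (hom_wd Hh Hhh)).
Qed.

Lemma part1 (n m : nat) (E : fn n -> fn n -> Prop) (F : fn m -> fn m -> Prop)
     (psi : fn n -> fn m) :
     congruence E -> congruence F ->
     talg_hom E F psi -> hom_injective E F psi ->
     rel_eq F (Erel (Vset F)) -> rel_eq E (Erel (Vset E)).
Proof.
move=> HE HF Hh Hi HFV a b; split.
  move=> Hab; have [Ha Hb] := cong_dom HE Hab.
  by split; [|split] => // x Hx; apply: Hx.
move=> [Ha [Hb Hab]]; apply: Hi => //; apply/HFV.
have tr : forall c, is_trat c -> is_trat (psi c).
  by move=> c Hc; have [] := cong_dom HF (hom_wd Hh (cong_refl HE Hc)).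
split; [exact: tr|split; [exact: tr|]] => y Hy.
have [x0 [Hx0 Hall]] := core HE HF Hh Hy.
by rewrite !Hall //; apply: Hab.
Qed.

Lemma trat_add_c n (E : fn n -> fn n -> Prop) (a b : fn n) : congruence E -> is_trat a -> is_trat b -> is_trat (tadd a b).
Proof. by move=> HE Ha Hb; have [] := cong_dom HE (cong_add HE (cong_refl HE Ha) (cong_refl HE Hb)). Qed.
Lemma trat_mul_c n (E : fn n -> fn n -> Prop) (a b : fn n) : congruence E -> is_trat a -> is_trat b -> is_trat (tmul a b).
Proof. by move=> HE Ha Hb; have [] := cong_dom HE (cong_mul HE (cong_refl HE Ha) (cong_refl HE Hb)). Qed.

Lemma inv_hom (n m : nat) (E : fn n -> fn n -> Prop) (F : fn m -> fn m -> Prop) :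
  congruence E -> congruence F -> talg_iso E F ->
  exists chi, talg_hom F E chi /\ hom_injective F E chi.
Proof.
move=> HE HF [phi [Hh [Hi Hs]]].
have ex : forall b : fn m, exists a : fn n, is_trat b -> is_trat a /\ F (phi a) b.
  move=> b; case: (classic (is_trat b)) => Hb.
    by have [a Ha] := Hs b Hb; exists a.
  by exists (@tconst n None).
pose chi := fun b => proj1_sig (constructive_indefinite_description _ (ex b)).
have Hchi : forall b, is_trat b -> is_trat (chi b) /\ F (phi (chi b)) b.
  by move=> b; rewrite /chi; case: constructive_indefinite_description.
have trphi : forall a, is_trat a -> F (phi a) (phi a).
  by move=> a Ha; exact: (hom_wd Hh (cong_refl HE Ha)).
have key : forall b b', is_trat b -> is_trat b' -> F b b' -> E (chi b) (chi b').
  move=> b b' Hb Hb' Hbb'; have [t1 f1] := Hchi b Hb; have [t2 f2] := Hchi b' Hb'.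
  apply: Hi => //; apply: (cong_trans HF f1); apply: (cong_trans HF Hbb').
  exact: (cong_sym HF f2).
exists chi; split; last first.
  move=> b b' Hb Hb' Hc; have [t1 f1] := Hchi b Hb; have [t2 f2] := Hchi b' Hb'.
  apply: (cong_trans HF (cong_sym HF f1)); apply: (cong_trans HF (hom_wd Hh Hc)); exact: f2.
split.
- move=> b b' Hbb'; have [Hb Hb'] := cong_dom HF Hbb'; exact: key.
- move=> b1 b2 H1 H2; have [t1 f1] := Hchi b1 H1; have [t2 f2] := Hchi b2 H2.
  have Ht := trat_add_c HF H1 H2; have [t3 f3] := Hchi _ Ht.
  apply: Hi => //; first exact: (trat_add_c HE t1 t2).
  apply: (cong_trans HF f3); apply: (cong_sym HF).
  apply: (cong_trans HF (hom_add Hh t1 t2)); exact: (cong_add HF f1 f2).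
- move=> b1 b2 H1 H2; have [t1 f1] := Hchi b1 H1; have [t2 f2] := Hchi b2 H2.
  have Ht := trat_mul_c HF H1 H2; have [t3 f3] := Hchi _ Ht.
  apply: Hi => //; first exact: (trat_mul_c HE t1 t2).
  apply: (cong_trans HF f3); apply: (cong_sym HF).
  apply: (cong_trans HF (hom_mul Hh t1 t2)); exact: (cong_mul HF f1 f2).
- move=> c; have [t1 f1] := Hchi _ (trat_const m c).
  apply: Hi => //; first exact: trat_const.
  apply: (cong_trans HF f1); apply: (cong_sym HF); exact: (hom_const Hh c).
Qed.

Theorem corollary3p16 :
  (forall (n m : nat) (E : fn n -> fn n -> Prop) (F : fn m -> fn m -> Prop)
     (psi : fn n -> fn m),
     congruence E -> congruence F ->
     talg_hom E F psi -> hom_injective E F psi ->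
     rel_eq F (Erel (Vset F)) -> rel_eq E (Erel (Vset E)))
  /\
  (forall (n m : nat) (E : fn n -> fn n -> Prop) (F : fn m -> fn m -> Prop),
     congruence E -> congruence F -> talg_iso E F ->
     (rel_eq E (Erel (Vset E)) <-> rel_eq F (Erel (Vset F)))).
Proof.
split; first exact: part1.
move=> n m E F HE HF Hiso; split.
  have [chi [Hc Hci]] := inv_hom HE HF Hiso.
  exact: part1 HF HE Hc Hci.
have [phi [Hh [Hi _]]] := Hiso.
exact: part1 HE HF Hh Hi.
Qed.
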